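(* Let $G$ be a finite dihedral group generated by two involutions $a$ and $b$. Then there is a conjugate $b'=c^{-1}bc$ ($c\in G$) of $b$ such that $a$ and $b'$ generate a Sylow $2$-subgroup of $G$. *)

(* Defs.v *)
From mathcomp Require Import all_boot all_fingroup all_solvable.

(* Main.v *)
From mathcomp Require Import all_boot all_fingroup all_solvable.
Set Implicit Arguments.
Unset Strict Implicit.
Unset Printing Implicit Defensive.
Local Open Scope group_scope.

Lemma invol (gT : finGroupType) (u : gT) : #[u] = 2%N -> u * u = 1.
Proof. by move=> h; rewrite -expg2 -h expg_order. Qed.

Lemma dih_notin (gT : finGroupType) (u v : gT) :
  #[u] = 2%N -> #[v] = 2%N -> u \notin <[u * v]>.
Proof.
move=> hu hv; have uu := invol hu; have vv := invol hv.
apply/negP => /cyclePmin [i lti ui].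
have cuw : commute ((u * v) ^+ i) (u * v) by apply/commute_sym/commuteX.
rewrite -ui in cuw.
have w2 : (u * v) ^+ 2 = 1.
  have h : u * v * u = v by rewrite -cuw mulgA uu mul1g.
  by rewrite expg2 mulgA h vv.
have : #[u * v] <= 2 by apply: dvdn_leq => //; rewrite order_dvdn w2.
move: lti; case: i ui => [|[|i]] ui //=.
  by move: hu; rewrite ui expg0 order1.
rewrite expg1 in ui.
move=> _ _; move: hv.
have -> : v = 1 by apply: (mulgI u); rewrite mulg1 -ui.
by rewrite order1.
by move=> a b; have := leq_trans a b.
Qed.

Lemma dih (gT : finGroupType) (u v : gT) :
  #[u] = 2%N -> #[v] = 2%N -> #|<<[set u; v]>>| = (#[u * v] * 2)%N.
Proof.
move=> hu hv; have uu := invol hu; have vv := invol hv.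
have ui : u^-1 = u by apply/eqP; rewrite eq_invg_mul uu.
have vi : v^-1 = v by apply/eqP; rewrite eq_invg_mul vv.
have nu : <[u]> \subset 'N(<[u * v]>).
  rewrite cycle_subG; apply/normP; rewrite -cycleJ -[in RHS]cycleV; congr <[_]>.
  by rewrite invMg ui vi conjgE ui !mulgA uu mul1g.
have E : <<[set u; v]>> = (<[u * v]> <*> <[u]>)%G.
  apply/eqP; rewrite eqEsubset; apply/andP; split.
    rewrite gen_subG; apply/subsetP => z; rewrite !inE => /orP[]/eqP->.
      by apply: (subsetP (joing_subr _ _)); apply: cycle_id.
    suff : u * (u * v) \in (<[u * v]> <*> <[u]>)%G by rewrite mulgA uu mul1g.
    apply: groupM; [apply: (subsetP (joing_subr _ _))|apply: (subsetP (joing_subl _ _))]; apply: cycle_id.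
  rewrite /= join_subG !cycle_subG; apply/andP; split.
    by apply: groupM; apply: mem_gen; rewrite !inE eqxx ?orbT.
  by apply: mem_gen; rewrite !inE eqxx ?orbT.
rewrite E /= (norm_joinEr nu) TI_cardMg; first by rewrite -hu.
rewrite setIC; apply: prime_TIg; first by rewrite /= -orderE hu.
by rewrite cycle_subG; apply: dih_notin.
Qed.

Theorem lemma2p2 (gT : finGroupType) (G : {group gT}) (a b : gT)
    (ha : #[a] = 2%N) (hb : #[b] = 2%N) (hG : G :=: <<[set a; b]>>) :
  exists2 c, c \in G & 2.-Sylow(G) <<[set a; b ^ c]>>.
Proof.
have aa := invol ha; have bb := invol hb.
have ai : a^-1 = a by apply/eqP; rewrite eq_invg_mul aa.
have bi : b^-1 = b by apply/eqP; rewrite eq_invg_mul bb.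
set x := a * b.
have step : forall y, a * ((a * y) ^ x) = x * y * x.
  move=> y; rewrite conjgE /x invMg ai bi !mulgA.
  by rewrite -(mulgA (a * b) a a) aa mulg1.
have conjx : forall j, a * b ^ (x ^+ j) = x ^+ (j.*2.+1).
  elim=> [|j IH]; first by rewrite expg0 conjg1 expg1.
  have e : b ^ (x ^+ j) = a * x ^+ (j.*2.+1) by rewrite -IH mulgA aa mul1g.
  by rewrite expgSr conjgM e step -expgS -expgSr.
have aG : a \in G by rewrite hG; apply: mem_gen; rewrite !inE eqxx.
have bG : b \in G by rewrite hG; apply: mem_gen; rewrite !inE eqxx orbT.
have xG : x \in G by apply: groupM.
set n := #[x]; set m := (n`_(2^'))%N.
have oddm : odd m by rewrite odd_2'nat part_pnat.
have mj : (m./2).*2.+1 = m.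
  by rewrite -[in RHS](odd_double_half m) oddm add1n.
exists (x ^+ m./2); first by apply: groupX.
have cardG : #|G| = (n * 2)%N by rewrite hG dih.
have n0 : 0 < n by apply: order_gt0.
have cardH : #|<<[set a; b ^ x ^+ m./2]>>| = (n`_2 * 2)%N.
  rewrite dih ?orderJ // conjx mj orderXdiv ?dvdn_part //.
  by rewrite -[in n %/ m](partnC 2 n0) mulnK ?part_gt0.
rewrite pHallE cardH cardG partnM // (part_pnat_id (pnat_id _)) // eqxx andbT.
rewrite gen_subG; apply/subsetP => z; rewrite !inE => /orP[]/eqP-> //.
by apply: groupJ => //; apply: groupX.
Qed.
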